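(* Let $C$ be a set of clients, $F$ a set of facilities, $o_f\ge0$ opening costs, $d(c,f)\ge 0$ connection costs, and $p_c\in[0,1]$ activation probabilities, and let $g_\pi(B)=1-\prod_{c\in B}(1-p_c)$ for $B\subseteq C$. Let $OPT_{\text{CONF-LP-FL}}$ be the optimum of the linear program $$\min \sum_{f\in F}o_f\sum_{B\subseteq C}y_B^f g_\pi(B)+\sum_{c\in C}\sum_{f\in F}p_c\, d(c,f)\sum_{B\subseteq C:\,c\in B}y_B^f$$ subject to $\sum_{f\in F}\sum_{B\subseteq C:\,c\in B}y_B^f\ge 1$ for all $c\in C$ and $y_B^f\ge 0$ for all $f\in F$, $B\subseteq C$; and let $OPT_{\text{LP-FL}}$ be the optimum of $$\min \sum_{f\in F}o_f\max_{c\in C}x_c^f+\sum_{f\in F}o_f\sum_{c\in C}p_c\bar x_c^f+\sum_{c\in C}\sum_{f\in F}p_c\,d(c,f)(x_c^f+\bar x_c^f)$$ subject to $\sum_{f\in F}(x_c^f+\bar x_c^f)\ge 1$ for all $c\in C$ and $x_c^f,\bar x_c^f\ge 0$. Then $OPT_{\text{LP-FL}}\le\frac{e}{e-1}\,OPT_{\text{CONF-LP-FL}}$. *)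

(* Defs.v *)
From HB Require Import structures.
From mathcomp Require Import all_boot all_order all_algebra.
From mathcomp Require Import all_classical all_reals all_analysis.
Set Implicit Arguments. Unset Strict Implicit. Unset Printing Implicit Defensive.
Import Order.TTheory GRing.Theory Num.Theory.
Local Open Scope ring_scope.

Section FL.
Variables (R : realType) (C F : finType).
Variables (o : F -> R) (d : C -> F -> R) (p : C -> R).

Definition g_pi (B : {set C}) : R := 1 - \prod_(c in B) (1 - p c).

Definition conf_feasible (y : F -> {set C} -> R) : Prop :=
  (forall c : C, 1 <= \sum_(f : F) \sum_(B : {set C} | c \in B) y f B) /\
  (forall f B, 0 <= y f B).

Definition conf_obj (y : F -> {set C} -> R) : R :=
  \sum_(f : F) o f * \sum_(B : {set C}) y f B * g_pi B
  + \sum_(c : C) \sum_(f : F) p c * d c f * \sum_(B : {set C} | c \in B) y f B.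

Definition lp_feasible (x xb : F -> C -> R) : Prop :=
  (forall c : C, 1 <= \sum_(f : F) (x f c + xb f c)) /\
  (forall f c, 0 <= x f c) /\ (forall f c, 0 <= xb f c).

(* max over c in C of x_c^f (taken as 0 when C is empty; x >= 0 anyway) *)
Definition lp_obj (x xb : F -> C -> R) : R :=
  \sum_(f : F) o f * \big[Num.max/0]_(c : C) x f c
  + \sum_(f : F) o f * \sum_(c : C) p c * xb f c
  + \sum_(c : C) \sum_(f : F) p c * d c f * (x f c + xb f c).

(* optima as infima in the extended reals (+oo if infeasible) *)
Definition OPT_CONF : \bar R :=
  ereal_inf [set (conf_obj y)%:E | y in conf_feasible].

Definition OPT_LP : \bar R :=
  ereal_inf [set (lp_obj xx.1 xx.2)%:E | xx in [set xx | lp_feasible xx.1 xx.2]].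

End FL.

(* Main.v *)
Require Import Defs.
From HB Require Import structures.
From mathcomp Require Import all_boot all_order all_algebra.
From mathcomp Require Import all_classical all_reals all_analysis.
From mathcomp Require Import ring lra.
Import Order.TTheory GRing.Theory Num.Theory.
Local Open Scope ring_scope.

Lemma key (R : realType) (s : R) : 0 <= s <= 1 -> expR (-s) <= 1 - s * (1 - expR (-1)).
Proof.
move=> /andP[s0 s1].
have P : Itv.spec (@Itv.num_sem R) (Itv.Real `[0%Z, 1%Z]) s.
  by rewrite /= /Itv.num_sem /= in_itv /= s0 s1 ger0_real.
pose t : {i01 R} := Itv.mk P.
have := convex_expR t (-1 : R^o) (0 : R^o).
rewrite !convRE /= expR0 mulr0 addr0 mulrN1.
move=> h; apply: (le_trans h); rewrite /unstable.onem; lra.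
Qed.

Lemma kE (R : realType) : (expR 1 / (expR 1 - 1)) * (1 - expR (-1)) = 1 :> R.
Proof.
have e1 : 1 < expR 1 :> R by rewrite expR_gt1.
rewrite expRN; field.
by rewrite gt_eqF ?subr_eq0 ?gt_eqF //; lra.
Qed.

Lemma k_ge1 (R : realType) : 1 <= expR 1 / (expR 1 - 1) :> R.
Proof.
have e1 : 1 < expR 1 :> R by rewrite expR_gt1.
rewrite ler_pdivlMr; last lra. lra.
Qed.

Section Aux.
Variables (R : realType) (C : finType) (p : C -> R).
Hypothesis hp : forall c, 0 <= p c <= 1.

Lemma keyB (B : {set C}) :
  (if 1 <= \sum_(c in B) p c then 1 else \sum_(c in B) p c)
  <= expR 1 / (expR 1 - 1) * (1 - \prod_(c in B) (1 - p c)).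
Proof.
set s := \sum_(c in B) p c.
have e1 : 1 < expR 1 :> R by rewrite expR_gt1.
have k0 : 0 <= expR 1 / (expR 1 - 1) :> R.
  by apply: divr_ge0; lra.
have s0 : 0 <= s by apply: sumr_ge0 => c _; case/andP: (hp c).
have hprod : \prod_(c in B) (1 - p c) <= expR (- s).
  rewrite /s -sumrN expR_sum; apply: ler_prod => c _.
  case/andP: (hp c) => h0 h1; rewrite subr_ge0 h1 /=.
  by have := expR_ge1Dx (- p c); rewrite addrC.
apply: (le_trans _ (ler_wpM2l k0 (lerB (lexx 1) hprod))).
case: ifP => hs.
  have : expR (- s) <= expR (-1) by rewrite ler_expR lerN2.
  move=> h; rewrite -[leLHS](kE R); apply: ler_wpM2l => //; lra.
have hs' : s <= 1 by apply/ltW; rewrite ltNge hs.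
have := @key R s; rewrite s0 hs' => /(_ isT) h.
apply: (@le_trans _ _ (expR 1 / (expR 1 - 1) * (s * (1 - expR (-1))))).
  by rewrite mulrCA kE mulr1.
apply: ler_wpM2l => //; lra.
Qed.
End Aux.

Lemma main_real (R : realType) (C F : finType)
  (o : F -> R) (d : C -> F -> R) (p : C -> R)
  (ho : forall f, 0 <= o f)
  (hd : forall c f, 0 <= d c f)
  (hp : forall c, 0 <= p c <= 1) (y : F -> {set C} -> R) :
  conf_feasible y -> exists x xb, lp_feasible x xb /\
    lp_obj o d p x xb <= expR 1 / (expR 1 - 1) * conf_obj o d p y.
Proof.
move=> [hcov hy0].
have e1 : 1 < expR 1 :> R by rewrite expR_gt1.
have k0 : 0 <= expR 1 / (expR 1 - 1) :> R by apply: divr_ge0; lra.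
pose big (B : {set C}) := 1 <= \sum_(c in B) p c.
pose x f c := \sum_(B : {set C}) (if (c \in B) && big B then y f B else 0).
pose xb f c := \sum_(B : {set C}) (if (c \in B) && ~~ big B then y f B else 0).
have hsum f c : x f c + xb f c = \sum_(B : {set C} | c \in B) y f B.
  rewrite /x /xb -big_split [RHS]big_mkcond /=; apply: eq_bigr => B _.
  by case: (c \in B); case: (big B) => /=; rewrite ?addr0 ?add0r.
exists x, xb; split.
  split; first by move=> c; under eq_bigr do rewrite hsum; exact: hcov.
  by split => f c; apply: sumr_ge0 => B _; case: ifP.
rewrite /lp_obj /conf_obj.
have -> : \sum_(c : C) \sum_(f : F) p c * d c f * (x f c + xb f c) =
          \sum_(c : C) \sum_(f : F) p c * d c f * \sum_(B : {set C} | c \in B) y f B.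
  by apply: eq_bigr => c _; apply: eq_bigr => f _; rewrite hsum.
set Conn := \sum_(c : C) \sum_(f : F) _.
have Conn0 : 0 <= Conn.
  apply: sumr_ge0 => c _; apply: sumr_ge0 => f _.
  case/andP: (hp c) => p0 _.
  by rewrite mulr_ge0 ?mulr_ge0 // sumr_ge0.
rewrite mulrDr; apply: lerD; last first.
  by rewrite -[leLHS]mul1r; apply: ler_wpM2r => //; exact: k_ge1.
rewrite -big_split mulr_sumr; apply: ler_sum => f _ /=.
rewrite -mulrDr mulrCA; apply: ler_wpM2l; first exact: ho.
have h1 : \big[Num.max/0]_(c : C) x f c <= \sum_(B : {set C}) (if big B then y f B else 0).
  apply: bigmax_le => [|c _].
    by apply: sumr_ge0 => B _; case: ifP.
  apply: ler_sum => B _; case: (c \in B); case: (big B) => //=.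
have h2 : \sum_(c : C) p c * xb f c =
    \sum_(B : {set C}) (if ~~ big B then y f B * \sum_(c in B) p c else 0).
  rewrite /xb; under eq_bigr do rewrite mulr_sumr.
  rewrite exchange_big /=; apply: eq_bigr => B _.
  case: (big B) => /=.
    by rewrite big1 // => c _; rewrite andbF mulr0.
  rewrite mulr_sumr [RHS]big_mkcond; apply: eq_bigr => c _.
  by rewrite andbT; case: (c \in B); rewrite ?mulr0 // mulrC.
rewrite h2; apply: le_trans (lerD h1 (lexx _)) _.
rewrite -big_split mulr_sumr; apply: ler_sum => B _.
rewrite mulrCA /g_pi; move: (@keyB R C p hp B); rewrite /big.
case: ifP => hb /= hk.
  by rewrite addr0 -[leLHS]mulr1; apply: ler_wpM2l => //; exact: hy0.
by rewrite add0r; apply: ler_wpM2l => //; exact: hy0.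
Qed.

Theorem lemma5 (R : realType) (C F : finType)
  (o : F -> R) (d : C -> F -> R) (p : C -> R)
  (ho : forall f, 0 <= o f)
  (hd : forall c f, 0 <= d c f)
  (hp : forall c, 0 <= p c <= 1) :
  (OPT_LP o d p <= ((expR 1 / (expR 1 - 1))%:E * OPT_CONF o d p)%E)%E.
Proof.
have e1 : 1 < expR 1 :> R by rewrite expR_gt1.
set k := expR 1 / (expR 1 - 1).
have kpos : 0 < k by apply: divr_gt0; lra.
have H : forall y, conf_feasible y -> (OPT_LP o d p <= (k * conf_obj o d p y)%:E)%E.
  move=> y hy; have [x [xb [hf hle]]] := @main_real R C F o d p ho hd hp y hy.
  apply: (@le_trans _ _ (lp_obj o d p x xb)%:E); last by rewrite lee_fin.
  by apply: ereal_inf_lbound; exists (x, xb).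
have H2 : ((k^-1)%:E * OPT_LP o d p <= OPT_CONF o d p)%E.
  apply/ereal_infP => _ [y hy <-].
  rewrite (_ : (conf_obj o d p y)%:E = ((k^-1)%:E * (k * conf_obj o d p y)%:E)%E);
    last by rewrite -EFinM mulrA mulVf ?mul1r // gt_eqF.
  by rewrite lee_pmul2l ?H // lte_fin invr_gt0.
rewrite -[leLHS]mul1e -[in leLHS](mulfV (lt0r_neq0 kpos)) EFinM -muleA.
by rewrite lee_pmul2l // lte_fin.
Qed.
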